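(* Let $X=X(G,C)$ be an oriented Cayley graph for a finite group $G$ of order $n>2$, with skew-symmetric adjacency matrix $A$. If there is a time $t$ such that all entries of $U(t)=\exp(-tA)$ have the same modulus (uniform mixing), then $n$ is an even perfect square.
   Context: For a finite group $G$ (multiplicative), $A_g$ is the permutation matrix with $(A_g)_{a,b}=1$ iff $ba^{-1}=g$, and $A_C=\sum_{g\in C}A_g$. An oriented Cayley graph $X(G,C)$ has $1\notin C$ and $C\cap C^{-1}=\emptyset$; its skew-symmetric adjacency matrix is $A=A_C-A_C^T$, with entry $1$ for arcs $a\to b$ ($ba^{-1}\in C$), $-1$ for reverse arcs, and $0$ otherwise. The continuous quantum walk on $X$ has transition matrix $U(t)=\exp(it(iA))=\exp(-tA)$. The group $G$ need not be abelian and $C$ need not be a union of conjugacy classes. *)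

(* Defs.v *)
From HB Require Import structures.
From mathcomp Require Import all_boot all_order all_algebra all_fingroup.
From mathcomp Require Import all_classical all_reals all_analysis.
Set Implicit Arguments.
Unset Strict Implicit.
Unset Printing Implicit Defensive.
Import Order.TTheory GRing.Theory Num.Theory.
Local Open Scope ring_scope.

Definition oriented_connection_set (gT : finGroupType) (C : {set gT}) : Prop :=
  (1%g \notin C) /\ [disjoint C & [set x^-1 | x in C]]%g.

(* Skew-symmetric adjacency matrix A = A_C - A_C^T, rows/columns indexed by
   the elements of gT (via enum_val).  (A_C)_{a,b} = 1 iff b a^{-1} \in C. *)
Definition skew_adj (R : realType) (gT : finGroupType) (C : {set gT})
  : 'M[R]_#|gT| :=
  \matrix_(i, j)
    (((enum_val j * (enum_val i)^-1)%g \in C)%:R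
     - ((enum_val i * (enum_val j)^-1)%g \in C)%:R).

Definition mxexp (R : realType) (n : nat) (M : 'M[R]_n) : 'M[R]_n :=
  \matrix_(i, j) limn (fun N : nat => \sum_(0 <= k < N) ((k`!%:R)^-1 * (M ^+ k) i j)).

(* Transition matrix U(t) = exp(it(iA)) = exp(-tA). *)
Definition transition (R : realType) (gT : finGroupType) (C : {set gT})
  (t : R) : 'M[R]_#|gT| :=
  mxexp ((- t) *: skew_adj R C).

Definition uniform_mixing_at (R : realType) (gT : finGroupType) (C : {set gT})
  (t : R) : Prop :=
  forall i j k l, `|transition C t i j| = `|transition C t k l|.

(* Main.v *)
Require Import Defs.
From HB Require Import structures.
From mathcomp Require Import all_boot all_order all_algebra all_fingroup.
From mathcomp Require Import all_classical all_reals all_analysis.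
From mathcomp Require Import ring lra.
Import Order.TTheory GRing.Theory Num.Theory.
Import numFieldNormedType.Exports.
Local Open Scope ring_scope.
Local Open Scope classical_set_scope.
Lemma cvg_sumI (R : realType) (I : finType) (f : I -> nat -> R) (a : I -> R) :
  (forall i, f i @ \oo --> a i) ->
  (fun n => \sum_i f i n) @ \oo --> \sum_i a i.
Proof.
move=> H; exact: (@cvg_big _ _ +%R 0 xpredT add_continuous).
Qed.

Lemma mxpow_bound (R : realType) (n : nat) (M : 'M[R]_n) k i j :
  `|(M ^+ k) i j| <= (\sum_i' \sum_j' `|M i' j'|) ^+ k.
Proof.
set b := \sum_i' _.
have hb : forall i, \sum_l `|M i l| <= b.
  move=> i0; rewrite /b [leRHS](bigD1 i0) //= lerDl.
  by apply: sumr_ge0 => x _; apply: sumr_ge0.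
have b0 : 0 <= b by apply: sumr_ge0 => x _; apply: sumr_ge0.
elim: k i j => [|k IH] i j.
  rewrite expr0 expr0 mxE; case: (i == j); rewrite ?normr1 ?normr0 //.
rewrite exprS -mulmxE mxE exprS.
apply: (le_trans (ler_norm_sum _ _ _)).
apply: (@le_trans _ _ (\sum_l `|M i l| * b ^+ k)).
  apply: ler_sum => l _; rewrite normrM ler_wpM2l //.
rewrite -mulr_suml ler_wpM2r // exprn_ge0 //.
Qed.

Lemma entry_cvg (R : realType) (n : nat) (M : 'M[R]_n) i j :
  cvgn (series (fun k => (k`!%:R)^-1 * (M ^+ k) i j)).
Proof.
apply: (@normed_cvg R R^o).
set b := \sum_i' \sum_j' `|M i' j'|.
apply: (@series_le_cvg _ _ (exp_coeff b)).
- by move=> k; rewrite /= normr_ge0.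
- move=> k; apply: exp_coeff_ge0; apply: sumr_ge0 => x _; exact: sumr_ge0.
- move=> k; rewrite /exp_coeff /= normrM mulrC [`|_^-1|]ger0_norm ?invr_ge0 //.
  by apply: ler_wpM2r; rewrite ?invr_ge0 // mxpow_bound.
- exact: is_cvg_series_exp_coeff.
Qed.
Definition Ep (R : realType) (N : nat) (x : R) : {poly R} :=
  \poly_(k < N) (x ^+ k / k`!%:R).
Arguments Ep {R}.

Lemma horner_Ep (R : realType) n (M : 'M[R]_n.+1) N x :
  horner_mx M (Ep N x) = \sum_(k < N) (x ^+ k / k`!%:R) *: M ^+ k.
Proof.
rewrite /Ep poly_def linear_sum /=; apply: eq_bigr => k _.
by rewrite linearZ /= rmorphXn /= horner_mx_X.
Qed.

Lemma coef_Ep_mul (R : realType) N (x y : R) p : (p < N)%N ->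
  (Ep N x * Ep N y)`_p = (Ep N (x + y))`_p.
Proof.
move=> pN; rewrite coefM coef_poly pN addrC exprDn mulr_suml.
apply: eq_bigr => -[j /= hj] _.
have jN : (j < N)%N by apply: (leq_ltn_trans _ pN); rewrite -ltnS.
have pjN : (p - j < N)%N by exact: (leq_ltn_trans (leq_subr _ _) pN).
rewrite !coef_poly jN pjN.
have hf : (p`! = 'C(p, j) * (j`! * (p - j)`!))%N by rewrite bin_fact.
rewrite hf !natrM mulr_natr.
have h1 : (j`!%:R : R) != 0 by rewrite pnatr_eq0 -lt0n fact_gt0.
have h2 : ((p - j)`!%:R : R) != 0 by rewrite pnatr_eq0 -lt0n fact_gt0.
have h3 : ('C(p, j)%:R : R) != 0 by rewrite pnatr_eq0 -lt0n bin_gt0.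
by field; rewrite h1 h2 h3.
Qed.

Lemma norm_coef_Ep (R : realType) N (x : R) k :
  `|(Ep N x)`_k| = (Ep N `|x|)`_k.
Proof.
rewrite !coef_poly; case: ifP => _; last by rewrite normr0.
by rewrite normrM normrX normfV normr_nat.
Qed.

Lemma coef_bound (R : realType) N p :
  `|(Ep N 1 * Ep N (-1) - Ep N (1 + -1))`_p| <=
  (Ep N 1 * Ep N 1 - Ep N (1 + 1) : {poly R})`_p.
Proof.
case: (ltnP p N) => pN.
  by rewrite !coefB !coef_Ep_mul // !subrr normr0.
rewrite !coefB !coef_poly ltnNge pN /= !subr0 !coefM.
apply: (le_trans (ler_norm_sum _ _ _)); apply: ler_sum => j _.
by rewrite normrM !norm_coef_Ep normrN normr1.
Qed.

Lemma horner_wide (R : realType) n (M : 'M[R]_n.+1) (q : {poly R}) K :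
  (size q <= K)%N -> horner_mx M q = \sum_(k < K) q`_k *: M ^+ k.
Proof.
move=> hK.
have hq : q = \poly_(k < K) q`_k.
  apply/polyP => k; rewrite coef_poly; case: ltnP => // hk.
  by rewrite nth_default // (leq_trans hK hk).
rewrite {1}hq poly_def linear_sum /=; apply: eq_bigr => k _.
by rewrite linearZ /= rmorphXn /= horner_mx_X.
Qed.

Lemma horner_entry_bound (R : realType) n (M : 'M[R]_n.+1) (q q' : {poly R}) K i j :
  (size q <= K)%N -> (size q' <= K)%N -> (forall p, `|q`_p| <= q'`_p) ->
  `|horner_mx M q i j| <= q'.[\sum_i' \sum_j' `|M i' j'|].
Proof.
move=> hq hq' hb; rewrite (@horner_wide _ _ M _ _ hq) (horner_coef_wide _ hq') summxE.
apply: (le_trans (ler_norm_sum _ _ _)); apply: ler_sum => k _.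
rewrite mxE normrM; apply: ler_pM => //; first exact: mxpow_bound.
Qed.

Lemma Ep_horner (R : realType) N (x b : R) :
  (Ep N x).[b] = series (exp_coeff (x * b)) N.
Proof.
rewrite (horner_coef_wide _ (size_poly _ _)) /series /= big_mkord.
apply: eq_bigr => k _; rewrite coef_poly ltn_ord /exp_coeff /= exprMn.
by rewrite mulrAC.
Qed.
Lemma entry_series_pos (R : realType) n (M : 'M[R]_n.+1) N i j :
  horner_mx M (Ep N 1) i j = \sum_(0 <= k < N) ((k`!%:R)^-1 * (M ^+ k) i j).
Proof.
rewrite horner_Ep summxE big_mkord; apply: eq_bigr => k _.
by rewrite mxE expr1n mul1r.
Qed.

Lemma entry_series_neg (R : realType) n (M : 'M[R]_n.+1) N i j :
  horner_mx M (Ep N (-1)) i j = \sum_(0 <= k < N) ((k`!%:R)^-1 * ((- M) ^+ k) i j).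
Proof.
rewrite horner_Ep summxE big_mkord; apply: eq_bigr => k _.
rewrite mxE -[- M]scaleN1r exprZn mxE; ring.
Qed.

Lemma size_Ep3 (R : realType) N (x y z : R) :
  (size (Ep N x * Ep N y - Ep N z)%R <= N + N)%N.
Proof.
apply: (leq_trans (size_polyD _ _)); rewrite geq_max size_polyN.
apply/andP; split; last by rewrite (leq_trans (size_poly _ _)) // leq_addr.
apply: (leq_trans (size_polyMleq _ _)).
apply: (leq_trans (leq_pred _)); apply: leq_add; exact: size_poly.
Qed.

Lemma horner_Ep0 (R : realType) n (M : 'M[R]_n.+1) N : (0 < N)%N ->
  horner_mx M (Ep N (1 + -1)) = 1.
Proof.
case: N => // N _; rewrite subrr horner_Ep big_ord_recl /= expr0 fact0 divr1.
rewrite scale1r expr0 big1 ?addr0 // => k _.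
by rewrite expr0n /= mul0r scale0r.
Qed.

Lemma mxexp_mulN (R : realType) n (M : 'M[R]_n) : mxexp M *m mxexp (- M) = 1%:M.
Proof.
case: n M => [|n] M; first by apply/matrixP => -[].
apply/matrixP => i j.
set b := \sum_i' \sum_j' `|M i' j'|.
have cu : forall i l, (fun N => horner_mx M (Ep N 1) i l) @ \oo --> mxexp M i l.
  move=> i0 l; rewrite mxE.
  under eq_fun do rewrite entry_series_pos.
  exact: entry_cvg.
have cv : forall i l, (fun N => horner_mx M (Ep N (-1)) i l) @ \oo --> mxexp (- M) i l.
  move=> i0 l; rewrite mxE.
  under eq_fun do rewrite entry_series_neg.
  exact: entry_cvg.
have cw : (fun N => horner_mx M (Ep N 1 * Ep N (-1)) i j) @ \oo
           --> (mxexp M *m mxexp (- M)) i j.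
  under eq_fun do rewrite rmorphM /= -mulmxE mxE.
  rewrite mxE; apply: cvg_sumI => l; apply: cvgM; [exact: cu | exact: cv].
pose B N := (Ep N 1 * Ep N 1 - Ep N (1 + 1)).[b].
have cB : B @ \oo --> 0.
  have -> : B = (fun N => series (exp_coeff b) N * series (exp_coeff b) N
                    - series (exp_coeff ((1 + 1) * b)) N).
    apply/funext => N; by rewrite /B !hornerE !Ep_horner mul1r.
  have -> : (0 : R) = expR b * expR b - expR ((1 + 1) * b).
    by rewrite mulrDl mul1r expRD subrr.
  apply: cvgB; first apply: cvgM; exact: is_cvg_series_exp_coeff.
have cw2 : (fun N => horner_mx M (Ep N 1 * Ep N (-1)) i j) @ \oo --> (1%:M : 'M[R]_n.+1) i j.
  apply: (@squeeze_cvgr _ _ _ _ (fun N => 1%:M i j - B N) (fun N => 1%:M i j + B N)).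
  - near=> N.
    have hN : (0 < N)%N by near: N; exists 1%N.
    have := @horner_entry_bound _ _ M _ _ (N + N) i j (size_Ep3 _ _ _ _ _)
              (size_Ep3 _ _ _ _ _) (@coef_bound _ N).
    rewrite rmorphB /= horner_Ep0 // -/b -/(B N) -ler_distl !mxE.
    by [].
  - by rewrite -[X in _ --> X]subr0; apply: cvgB => //; exact: cvg_cst.
  - by rewrite -[X in _ --> X]addr0; apply: cvgD => //; exact: cvg_cst.
by rewrite -(cvg_lim _ cw) // (cvg_lim _ cw2).
Unshelve. all: by end_near.
Qed.
Lemma trmxXn (R : realType) n (M : 'M[R]_n) k : (M ^+ k)^T = (M^T) ^+ k.
Proof.
elim: k => [|k IH]; first by rewrite !expr0 trmx1.
by rewrite exprS -mulmxE trmx_mul IH mulmxE -exprSr.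
Qed.

Lemma trmx_mxexp (R : realType) n (M : 'M[R]_n) : (mxexp M)^T = mxexp (M^T).
Proof.
apply/matrixP => i j; rewrite !mxE; congr (lim (_ @ \oo)); apply/funext => N.
by apply: eq_bigr => k _; rewrite -trmxXn mxE.
Qed.

Lemma rowsum_pow (R : realType) n (M : 'M[R]_n) i k :
  (forall i, \sum_j M i j = 0) -> \sum_j (M ^+ k.+1) i j = 0.
Proof.
move=> H; rewrite exprSr -mulmxE.
under eq_bigr do rewrite mxE.
rewrite exchange_big /=.
under eq_bigr do rewrite -mulr_sumr H mulr0.
by rewrite big1.
Qed.

Lemma rowsum_mxexp (R : realType) n (M : 'M[R]_n) i :
  (forall i, \sum_j M i j = 0) -> \sum_j mxexp M i j = 1.
Proof.
case: n M i => [|n] M i H; first by case: i.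
have cu : forall l, (fun N => horner_mx M (Ep N 1) i l) @ \oo --> mxexp M i l.
  move=> l; rewrite mxE.
  under eq_fun do rewrite entry_series_pos.
  exact: entry_cvg.
have c1 := @cvg_sumI _ _ _ _ cu.
have c2 : (fun N => \sum_l horner_mx M (Ep N 1) i l) @ \oo --> (1 : R).
  apply: cvg_near_cst; near=> N.
  have hN : (0 < N)%N by near: N; exists 1%N.
  rewrite -(prednK hN); move: (N.-1) => N0.
  under eq_bigr do rewrite horner_Ep summxE.
  rewrite exchange_big big_ord_recl /= [X in _ + X]big1 ?addr0; last first.
    move=> k _; under eq_bigr do rewrite mxE.
    by rewrite -mulr_sumr /bump /= add1n rowsum_pow // mulr0.
  under eq_bigr do rewrite expr0 fact0 expr0 divr1 scale1r.
  rewrite (bigD1 i) //= big1 ?addr0; first by rewrite mxE eqxx.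
  by move=> l /negbTE nl; rewrite mxE eq_sym nl.
by rewrite -(cvg_lim _ c1) // (cvg_lim _ c2).
Unshelve. all: by end_near.
Qed.
Lemma sign_sum (R : realType) n (f : 'I_n -> R) d :
  (forall j, `|f j| = d) ->
  \sum_j f j = (2 * (\sum_j (nat_of_bool (0 <= f j)%R))%:R - n%:R) * d.
Proof.
move=> H.
have hf j : f j = (2 * (nat_of_bool (0 <= f j)%R)%:R - 1) * d.
  rewrite -(H j); case: (lerP 0 (f j)) => h /=.
    by rewrite ger0_norm //; ring.
  by rewrite ltr0_norm //; ring.
rewrite (eq_bigr _ (fun j _ => hf j)) -mulr_suml sumrB -mulr_sumr natr_sum.
by rewrite sumr_const card_ord.
Qed.

Lemma hadamard_count (R : realType) n (U : 'M[R]_n) (c : R) :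
  (2 < n)%N -> (forall i j, `|U i j| = c) -> U *m U^T = 1%:M ->
  (forall i, \sum_j U i j = 1) -> ~~ odd n /\ exists m, n = (m ^ 2)%N.
Proof.
move=> n2 Hc orth rows.
have h0 : (0 < n)%N by apply: ltn_trans n2.
have h1 : (1 < n)%N by apply: ltn_trans n2.
pose i0 : 'I_n := Ordinal h0.
pose i1 : 'I_n := Ordinal h1.
have dot : forall i k, \sum_j U i j * U k j = (i == k)%:R.
  move=> i k; have := congr1 (fun A : 'M[R]_n => A i k) orth; rewrite /= !mxE => <-.
  by apply: eq_bigr => j _; rewrite mxE.
have nc : n%:R * (c * c) = 1.
  transitivity (\sum_j U i0 j * U i0 j); last by rewrite dot eqxx.
  have -> : \sum_j U i0 j * U i0 j = \sum_(j < n) (c * c).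
    apply: eq_bigr => j _; rewrite -(Hc i0 j) -!expr2 real_normK //.
    exact: num_real.
  by rewrite sumr_const card_ord mulr_natl.
have cc0 : c * c != 0.
  by apply/eqP => h; move: nc; rewrite h mulr0 => /eqP; rewrite eq_sym oner_eq0.
have c0 : c != 0 by apply/eqP => h; move: cc0; rewrite h mulr0 eqxx.
split.
  have := dot i0 i1; rewrite (@sign_sum _ _ _ (c * c)); last first.
    by move=> j; rewrite normrM !Hc.
  have -> : (i0 == i1) = false by [].
  move=> /eqP; rewrite mulf_eq0 (negbTE cc0) orbF subr_eq0 -natrM eqr_nat.
  by move=> /eqP <-; rewrite oddM andFb.
have := rows i0; rewrite (@sign_sum _ _ _ _ (Hc i0)).
set Q := (\sum_j _)%N => hQ.
have hsq : (2 * Q%:R - n%:R) ^+ 2 = n%:R :> R.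
  apply: (mulIf cc0).
  rewrite nc; transitivity (((2 * Q%:R - n%:R) * c) ^+ 2); first by ring.
  by rewrite hQ expr1n.
case: (leqP n (2 * Q)) => hle.
  exists (2 * Q - n)%N; apply/eqP; rewrite -(eqr_nat R) natrX natrB //.
  by rewrite natrM hsq eqxx.
exists (n - 2 * Q)%N; apply/eqP; rewrite -(eqr_nat R) natrX (natrB _ (ltnW hle)).
by rewrite natrM -opprB sqrrN hsq eqxx.
Qed.
Lemma skew_tr (R : realType) (gT : finGroupType) (C : {set gT}) :
  (skew_adj R C)^T = - skew_adj R C.
Proof. by apply/matrixP => i j; rewrite !mxE opprB. Qed.

Lemma skew_rowsum (R : realType) (gT : finGroupType) (C : {set gT}) i :
  \sum_j skew_adj R C i j = 0.
Proof.
under eq_bigr do rewrite mxE.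
rewrite sumrB; apply/eqP; rewrite subr_eq0; apply/eqP.
set a := enum_val i.
rewrite -(big_enum_val (fun x => ((x * a^-1)%g \in C)%:R)).
rewrite -(big_enum_val (fun x => ((a * x^-1)%g \in C)%:R)).
rewrite (reindex_inj (mulIg a)) /=.
have hinj : injective (fun x : gT => (x^-1 * a)%g).
  by move=> x y /mulIg /invg_inj.
rewrite [RHS](reindex_inj hinj) /=.
apply: eq_bigr => x _; by rewrite mulgK invMg invgK mulgA mulgV mul1g.
Qed.
Theorem lemma10p3 (R : realType) (gT : finGroupType) (C : {set gT}) :
  (2 < #|gT|)%N ->
  oriented_connection_set C ->
  (exists t : R, uniform_mixing_at C t) ->
  ~~ odd #|gT| /\ exists m : nat, #|gT| = (m ^ 2)%N.
Proof.
move=> n2 _ [t Hu].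
set U := transition C t.
have hU : U = mxexp ((- t) *: skew_adj R C) by [].
have hT : U^T = mxexp (- ((- t) *: skew_adj R C)).
  rewrite hU trmx_mxexp; congr mxexp.
  apply/matrixP => i j; rewrite !mxE. ring.
have orth : U *m U^T = 1%:M by rewrite hT hU mxexp_mulN.
have rows : forall i, \sum_j U i j = 1.
  move=> i; rewrite hU; apply: rowsum_mxexp => k.
  under eq_bigr do rewrite mxE.
  by rewrite -mulr_sumr skew_rowsum mulr0.
have h0 : (0 < #|gT|)%N by apply: ltn_trans n2.
by apply: (@hadamard_count R _ U `|U (Ordinal h0) (Ordinal h0)|) => // i j.
Qed.
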